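(* Let $n$ be an even positive integer, $p$ a prime dividing $n$, and $p^a$ the largest power of $p$ dividing $n$. Suppose there is a prime $q$ with $q<n/2$ and $n-2q<p^a$. If there is a multiple $k$ of $p^a$ in the interval $[q,n/2]$, then $p$ is odd and $k=n/2$. *)

(* Defs.v *)
From mathcomp Require Import all_boot.

(* Main.v *)
Require Import Defs.
From mathcomp Require Import all_boot.
From mathcomp Require Import zify.

Theorem mainTheorem19 (n p q k : nat) :
  0 < n -> ~~ odd n ->
  prime p -> p %| n ->
  prime q -> q < n %/ 2 -> n - 2 * q < p ^ logn p n ->
  p ^ logn p n %| k -> q <= k <= n %/ 2 ->
  odd p /\ k = n %/ 2.
Proof.
move=> n0 ev pp pn qp qlt hlt /dvdnP [a ka] /andP [qk km].
have /dvdnP [b nb] := pfactor_dvdnn p n.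
set P := p ^ logn p n in hlt ka nb.
have P0 : 0 < P by rewrite expn_gt0 prime_gt0.
have n2 : n = 2 * (n %/ 2).
  by have := divn_eq n 2; rewrite modn2 (negbTE ev) addn0 mulnC.
have hb : b = 2 * a.
  apply/eqP; rewrite eqn_leq; apply/andP; split.
  - have : b * P < (2 * a).+1 * P by rewrite mulSn; nia.
    by rewrite ltn_pmul2r // ltnS.
  - by rewrite -(leq_pmul2r P0); nia.
have kE : k = n %/ 2 by nia.
split => //.
case: (even_prime pp) => [p2|//]; exfalso.
have : p ^ (logn p n).+1 %| n.
  have h : 2 * P %| n by apply/dvdnP; exists a; rewrite nb hb; lia.
  by rewrite expnS -/P p2.
by rewrite pfactor_dvdn // ltnn.
Qed.
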